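(* Let $$z=e^{1/2}\int_0^1 \frac{e^{-1/(2t^2)}}{t^2}\,dt .$$ For $N\ge1$ let $$R_N=\cfrac{1}{1+\cfrac{1}{1+\cfrac{2}{\ddots\,1+\cfrac{N-1}{1+N}}}}$$ (partial numerators $1,2,\dots,N$). Then $R_N\to z$ as $N\to\infty$, that is, $$z=\cfrac{1}{1+\cfrac{1}{1+\cfrac{2}{1+\cfrac{3}{1+\cfrac{4}{1+\cfrac{5}{1+\cdots}}}}}} .$$
   Context: $z$ is the value the paper assigns to the divergent series $1-1+1\cdot3-1\cdot3\cdot5+1\cdot3\cdot5\cdot7-\cdots$. *)

(* Defs.v *)
From Stdlib Require Import Reals.
Open Scope R_scope.

(* Integrand t |-> e^{-1/(2 t^2)} / t^2 (value at t = 0 is irrelevant for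
   the Riemann integral). *)
Definition integrand (t : R) : R := exp (- / (2 * t ^ 2)) / t ^ 2.

(* cf_tail N m = T_{N-m}, where T_N = N and T_k = k / (1 + T_{k+1}). *)
Fixpoint cf_tail (N m : nat) : R :=
  match m with
  | O => INR N
  | S m' => INR (N - S m') / (1 + cf_tail N m')
  end.

(* R_N = 1 / (1 + 1/(1 + 2/( ... (N-1)/(1+N)))) = 1 / (1 + T_1), N >= 1. *)
Definition R_cf (N : nat) : R := 1 / (1 + cf_tail N (N - 1)).

(* Main.v *)
Require Import Defs.
From Stdlib Require Import Reals Lra Lia.
From Coquelicot Require Import Coquelicot.
Open Scope R_scope.

Definition cc (k : nat) : R := match k with O => 1 | S _ => INR k end.
Definition hh (k : nat) (x : R) : R := cc k / (1 + x).
Fixpoint G (n : nat) (x : R) : R := match n with O => x | S m => G m (hh m x) end.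
Fixpoint PQ (a b : R) (n : nat) : R :=
  match n with O => a | S m => match m with O => b | S k => PQ a b m + cc k * PQ a b k end end.
Definition Pp := PQ 1 0.
Definition Qq := PQ 0 1.
Fixpoint Cc (n : nat) : R := match n with O => 1 | S m => cc m * Cc m end.

Lemma PQ_SS a b n : PQ a b (S (S n)) = PQ a b (S n) + cc n * PQ a b n.
Proof. reflexivity. Qed.

Lemma cc_pos k : 0 < cc k.
Proof. destruct k. simpl; lra. unfold cc. apply lt_0_INR; lia. Qed.

Lemma Q_facts n : 0 <= Qq n /\ Qq n <= Qq (S n) /\ 1 <= Qq (S n).
Proof.
  induction n as [|n IH].
  - unfold Qq; simpl; lra.
  - destruct IH as [H1 [H2 H3]]. unfold Qq in *. rewrite PQ_SS.
    pose proof (cc_pos n). assert (0 <= cc n * PQ 0 1 n) by (apply Rmult_le_pos; lra).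
    lra.
Qed.

Lemma C_pos n : 0 < Cc n.
Proof. induction n; simpl. lra. apply Rmult_lt_0_compat; auto using cc_pos. Qed.

Lemma det n : Pp n * Qq (S n) - Pp (S n) * Qq n = (-1) ^ n * Cc n.
Proof.
  induction n as [|n IH].
  - unfold Pp, Qq; simpl; lra.
  - unfold Pp, Qq in *. rewrite PQ_SS, PQ_SS. simpl Cc. simpl pow.
    replace (PQ 1 0 (S n) * (PQ 0 1 (S n) + cc n * PQ 0 1 n) -
      (PQ 1 0 (S n) + cc n * PQ 1 0 n) * PQ 0 1 (S n)) with
      (- cc n * (PQ 1 0 n * PQ 0 1 (S n) - PQ 1 0 (S n) * PQ 0 1 n)) by ring.
    rewrite IH. ring.
Qed.

Lemma QQ_lower n : (1 <= n)%nat -> INR n * Cc n <= Qq (S n) * Qq n.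
Proof.
  induction n as [|n IH]; intros Hn. lia.
  destruct n as [|n].
  - unfold Qq; simpl; lra.
  - specialize (IH ltac:(lia)).
    destruct (Q_facts (S n)) as [A1 [A2 A3]].
    unfold Qq in *. rewrite PQ_SS. change (Cc (S (S n))) with (cc (S n) * Cc (S n)).
    replace (cc (S n)) with (INR (S n)) by reflexivity.
    pose proof (C_pos (S n)). pose proof (pos_INR (S n)).
    set (a := PQ 0 1 (S n)) in *. set (b := PQ 0 1 (S (S n))) in *. set (m := INR (S n)) in *.
    rewrite S_INR. fold m.
    assert (b * b >= a * b) by nra.
    assert ((m+1) * (m * Cc (S n)) <= (m+1) * (b * a)) by (apply Rmult_le_compat_l; lra).
    nra.
Qed.

Lemma G_formula n x : 0 <= x -> G n x = (Pp (S n) + x * Pp n) / (Qq (S n) + x * Qq n).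
Proof.
  revert x; induction n as [|n IH]; intros x Hx.
  - unfold Pp, Qq; simpl. field.
  - simpl G. assert (Hh : 0 <= hh n x).
    { unfold hh. apply Rmult_le_pos. left; apply cc_pos. left; apply Rinv_0_lt_compat; lra. }
    rewrite (IH _ Hh). destruct (Q_facts n) as [A1 [A2 A3]].
    unfold Pp, Qq in *. rewrite !PQ_SS. unfold hh.
    pose proof (cc_pos n).
    assert (0 <= cc n * PQ 0 1 n) by nra.
    assert (0 < PQ 0 1 (S n) + cc n * PQ 0 1 n + x * PQ 0 1 (S n)) by nra.
    assert (0 < PQ 0 1 (S n) * (1 + x) + cc n * PQ 0 1 n) by nra.
    field. repeat split; lra.
Qed.

Lemma G_err n r : (1 <= n)%nat -> 0 <= r -> Rabs (G n r - G n 0) <= / INR n.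
Proof.
  intros Hn Hr. rewrite !G_formula by lra.
  destruct (Q_facts n) as [A1 [A2 A3]].
  pose proof (QQ_lower n Hn). pose proof (C_pos n). pose proof (det n).
  assert (Qn : 0 < Qq n).
  { destruct n. lia. pose proof (QQ_lower (S n) Hn). rewrite S_INR in H2.
    pose proof (pos_INR n). destruct A1 as [?|E]; auto. rewrite <- E in H2. nra. }
  assert (Hinr : 0 < INR n) by (apply lt_0_INR; lia).
  assert (Hrq : 0 <= r * Qq n) by nra.
  assert (Hden : 0 < Qq (S n) * (Qq (S n) + r * Qq n)) by (apply Rmult_lt_0_compat; lra).
  replace ((Pp (S n) + r * Pp n) / (Qq (S n) + r * Qq n) - (Pp (S n) + 0 * Pp n) / (Qq (S n) + 0 * Qq n))
    with (r * (Pp n * Qq (S n) - Pp (S n) * Qq n) / (Qq (S n) * (Qq (S n) + r * Qq n))) by (field; nra).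
  rewrite H1. unfold Rdiv. rewrite Rabs_mult, Rabs_mult, Rabs_mult, Rabs_right by lra.
  rewrite pow_1_abs, Rmult_1_l, (Rabs_right (Cc n)) by lra.
  rewrite Rabs_right by (left; apply Rinv_0_lt_compat; nra).
  apply Rle_trans with (Cc n / (Qq (S n) * Qq n)).
  - unfold Rdiv. rewrite Rinv_mult. rewrite Rinv_mult.
    assert (r * / (Qq (S n) + r * Qq n) <= / Qq n).
    { apply Rmult_le_reg_r with ((Qq (S n) + r * Qq n) * Qq n). nra.
      field_simplify; nra. }
    pose proof (Rinv_0_lt_compat _ Qn). pose proof (Rinv_0_lt_compat (Qq (S n)) ltac:(lra)).
    assert (0 <= r * / (Qq (S n) + r * Qq n)) by (apply Rmult_le_pos; [lra| left; apply Rinv_0_lt_compat; nra]).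
    replace (r * Cc n * (/ Qq (S n) * / (Qq (S n) + r * Qq n))) with ((Cc n * / Qq (S n)) * (r * / (Qq (S n) + r * Qq n))) by ring.
    replace (Cc n * (/ Qq (S n) * / Qq n)) with ((Cc n * / Qq (S n)) * / Qq n) by ring.
    apply Rmult_le_compat_l; auto. nra.
  - assert (0 < Qq (S n) * Qq n) by nra.
    apply Rmult_le_reg_r with (INR n * (Qq (S n) * Qq n)). nra.
    unfold Rdiv. replace (Cc n * / (Qq (S n) * Qq n) * (INR n * (Qq (S n) * Qq n))) with (INR n * Cc n) by (field; lra).
    replace (/ INR n * (INR n * (Qq (S n) * Qq n))) with (Qq (S n) * Qq n) by (field; lra). lra.
Qed.

Lemma G_shift N m : (S m < N)%nat -> G (N - S m) (cf_tail N (S m)) = G (N - m) (cf_tail N m).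
Proof.
  intros H. replace (N - m)%nat with (S (N - S m)) by lia. simpl G. simpl cf_tail.
  unfold hh. f_equal. unfold Rdiv. f_equal. destruct (N - S m)%nat eqn:E. lia. reflexivity.
Qed.

Lemma G_tail N m : (m < N)%nat -> G (N - m) (cf_tail N m) = G N (INR N).
Proof.
  induction m as [|m IH]; intros H.
  - rewrite Nat.sub_0_r. reflexivity.
  - rewrite G_shift by lia. apply IH; lia.
Qed.

Lemma R_cf_G N : (1 <= N)%nat -> R_cf N = G (S N) 0.
Proof.
  intros H. unfold R_cf. simpl G. 
  replace (hh N 0) with (INR N) by (unfold hh; destruct N as [|N']; [lia|]; change (cc (S N')) with (INR (S N')); field).
  rewrite <- (G_tail N (N - 1)) by lia. replace (N - (N - 1))%nat with 1%nat by lia.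
  simpl. unfold hh. reflexivity.
Qed.

Lemma exp_mult_pow k y : exp (INR k * y) = exp y ^ k.
Proof.
  induction k as [|k IH]. simpl. rewrite Rmult_0_l, exp_0. reflexivity.
  rewrite S_INR, Rmult_plus_distr_r, exp_plus, IH, Rmult_1_l. simpl. ring.
Qed.

Lemma exp_lower k s : (1 <= k)%nat -> 0 <= s -> (s / INR k) ^ k <= exp s.
Proof.
  intros Hk Hs. assert (Hi : 0 < INR k) by (apply lt_0_INR; lia).
  replace s with (INR k * (s / INR k)) at 2 by (field; lra).
  rewrite exp_mult_pow. apply pow_incr. split.
  - apply Rmult_le_pos; [lra| left; apply Rinv_0_lt_compat; lra].
  - pose proof (exp_ineq1_le (s / INR k)). lra.
Qed.

Definition Psi (k : nat) (t : R) : R := exp (- / (2 * t ^ 2)) / t ^ k.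
Definition K (k : nat) : R := (2 * INR k) ^ k.

Lemma Psi_0 k : (1 <= k)%nat -> Psi k 0 = 0.
Proof. intros Hk. unfold Psi. rewrite (pow_i k) by lia. unfold Rdiv. rewrite Rinv_0. ring. Qed.

Lemma K_pos k : 0 <= K k.
Proof. unfold K. apply pow_le. pose proof (pos_INR k). lra. Qed.

Lemma Psi_bound k t : (1 <= k)%nat -> Rabs t <= 1 -> Rabs (Psi k t) <= K k * Rabs t.
Proof.
  intros Hk Ht. destruct (Req_dec t 0) as [->|Ht0].
  - rewrite Psi_0 by auto. rewrite Rabs_R0. pose proof (K_pos k). lra.
  - set (a := Rabs t). assert (Ha : 0 < a) by (apply Rabs_pos_lt; auto).
    assert (Hi : 0 < INR k) by (apply lt_0_INR; lia).
    unfold Psi. rewrite Rabs_div by (apply pow_nonzero; auto).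
    rewrite Rabs_right by (left; apply exp_pos). rewrite <- RPow_abs. fold a.
    rewrite <- pow2_abs. fold a.
    set (s := / (2 * a ^ 2)). assert (Hs : 0 < s) by (unfold s; apply Rinv_0_lt_compat; nra).
    rewrite exp_Ropp.
    assert (H1 : (s / INR k * a) ^ k <= exp s * a ^ k).
    { rewrite Rpow_mult_distr. apply Rmult_le_compat_r. apply pow_le; lra. apply exp_lower; [lia|lra]. }
    assert (H2 : s / INR k * a = / (2 * INR k * a)) by (unfold s; field; repeat split; lra).
    rewrite H2, pow_inv in H1.
    assert (H3 : 0 < (2 * INR k * a) ^ k) by (apply pow_lt; nra).
    apply Rle_trans with ((2 * INR k * a) ^ k).
    + unfold Rdiv. rewrite <- Rinv_mult. rewrite <- (Rinv_inv ((2 * INR k * a) ^ k)).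
      apply Rinv_le_contravar. apply Rinv_0_lt_compat; auto. auto.
    + rewrite Rpow_mult_distr. unfold K. apply Rmult_le_compat_l. apply pow_le; lra.
      destruct k. lia. change (a ^ S k) with (a * a ^ k). apply Rle_trans with (a * 1); [|lra]. apply Rmult_le_compat_l. lra.
      rewrite <- (pow1 k). apply pow_incr. split. apply Rabs_pos. auto.
Qed.

Lemma Psi_S k t : t <> 0 -> Psi (S k) t = Psi k t / t.
Proof. intros Ht. unfold Psi. pose proof (pow_nonzero t k Ht). simpl pow. field. auto. Qed.

Lemma Psi_der k t : t <> 0 -> is_derive (Psi k) t (Psi (S (S (S k))) t - INR k * Psi (S k) t).
Proof.
intros Ht. unfold Psi. pose proof (pow_nonzero t k Ht). auto_derive.
repeat split; auto. apply Rmult_integral_contrapositive; split; [lra|]. apply Rmult_integral_contrapositive; split; lra.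
destruct k as [|k]. simpl. field; auto.
pose proof (pow_nonzero t k Ht). simpl pow. simpl Init.Nat.pred. field. auto.
Qed.

Lemma cont0 (f : R -> R) M : f 0 = 0 -> 0 <= M ->
  (forall h, Rabs h <= 1 -> Rabs (f h) <= M * Rabs h) -> continuity_pt f 0.
Proof.
  intros H0 HM Hb eps Heps. exists (Rmin 1 (eps / (M + 1))). split.
  - apply Rmin_pos. lra. apply Rdiv_lt_0_compat; lra.
  - intros x [_ Hx]. simpl in *. unfold R_dist in *. rewrite H0, Rminus_0_r in *.
    assert (Hx1 : Rabs x <= 1) by (pose proof (Rmin_l 1 (eps/(M+1))); lra).
    assert (Hx2 : Rabs x < eps / (M+1)) by (pose proof (Rmin_r 1 (eps/(M+1))); lra).
    specialize (Hb x Hx1). apply Rle_lt_trans with (M * Rabs x); auto.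
    apply Rle_lt_trans with (M * (eps / (M+1))). apply Rmult_le_compat_l; lra.
    apply Rmult_lt_reg_r with (M+1). lra. replace (M * (eps / (M + 1)) * (M + 1)) with (M * eps) by (field; lra). nra.
Qed.

Lemma der0 (f : R -> R) M : f 0 = 0 -> 0 <= M ->
  (forall h, Rabs h <= 1 -> Rabs (f h) <= M * h ^ 2) -> derivable_pt_lim f 0 0.
Proof.
  intros H0 HM Hb eps Heps.
  assert (Hd : 0 < Rmin 1 (eps / (M + 1))) by (apply Rmin_pos; [lra| apply Rdiv_lt_0_compat; lra]).
  exists (mkposreal _ Hd). intros h Hh Hx. simpl in Hx.
  rewrite Rplus_0_l, H0, Rminus_0_r, Rminus_0_r.
  assert (Hx1 : Rabs h <= 1) by (pose proof (Rmin_l 1 (eps/(M+1))); lra).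
  assert (Hx2 : Rabs h < eps / (M+1)) by (pose proof (Rmin_r 1 (eps/(M+1))); lra).
  specialize (Hb h Hx1). assert (Ha : 0 < Rabs h) by (apply Rabs_pos_lt; auto).
  unfold Rdiv. rewrite Rabs_mult, Rabs_inv.
  rewrite <- pow2_abs in Hb.
  apply Rle_lt_trans with (M * Rabs h).
  - apply Rmult_le_reg_r with (Rabs h). auto. rewrite Rmult_assoc, Rinv_l by lra. nra.
  - apply Rle_lt_trans with (M * (eps / (M+1))). apply Rmult_le_compat_l; lra.
    apply Rmult_lt_reg_r with (M+1). lra. replace (M * (eps / (M + 1)) * (M + 1)) with (M * eps) by (field; lra). nra.
Qed.

Lemma Psi_cont k t : (1 <= k)%nat -> continuous (Psi k) t.
Proof.
  intros Hk. destruct (Req_dec t 0) as [->|Ht].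
  - apply continuity_pt_filterlim. apply cont0 with (K k). apply Psi_0; auto. apply K_pos.
    intros h Hh. apply Psi_bound; auto.
  - apply (ex_derive_continuous (K := R_AbsRing) (V := R_NormedModule)). eexists. apply Psi_der; auto.
Qed.

Definition f (n : nat) (t : R) : R := (1 - t) ^ n * Psi (S (S n)) t.
Definition g (n : nat) (t : R) : R := (1 - t) ^ n * t * Psi (S n) t.
Definition d (n : nat) (t : R) : R :=
  f (S n) t + f n t - INR n * ((1 - t) ^ (pred n) * Psi (S n) t).

Lemma poly_cont n t : continuous (fun t => (1 - t) ^ n) t.
Proof. apply (ex_derive_continuous (K := R_AbsRing) (V := R_NormedModule)). auto_derive. auto. Qed.

Lemma f_cont n t : continuous (f n) t.
Proof.
  unfold f. apply (continuous_mult (fun t => (1 - t) ^ n) (Psi (S (S n)))).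
  apply poly_cont. apply Psi_cont; lia.
Qed.

Lemma d_cont n t : continuous (d n) t.
Proof.
  unfold d. apply (continuous_minus (fun t => f (S n) t + f n t) (fun t => INR n * ((1 - t) ^ (pred n) * Psi (S n) t))).
  apply (continuous_plus (f (S n)) (f n)); apply f_cont.
  apply (continuous_mult (fun _ => INR n) (fun t => (1 - t) ^ (pred n) * Psi (S n) t)).
  apply continuous_const.
  apply (continuous_mult (fun t => (1 - t) ^ (pred n)) (Psi (S n))).
  apply poly_cont. apply Psi_cont; lia.
Qed.

Lemma g_der n t : is_derive (g n) t (d n t).
Proof.
  destruct (Req_dec t 0) as [->|Ht].
  - apply is_derive_Reals.
    replace (d n 0) with 0 by (unfold d, f; rewrite !Psi_0 by lia; ring).
    apply der0 with (2 ^ n * K (S n)).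
    + unfold g. rewrite Psi_0 by lia. ring.
    + apply Rmult_le_pos. apply pow_le; lra. apply K_pos.
    + intros h Hh. unfold g. rewrite !Rabs_mult. rewrite <- RPow_abs.
      assert (A1 : Rabs (1 - h) ^ n <= 2 ^ n).
      { apply pow_incr. split. apply Rabs_pos. 
        apply Rle_trans with (Rabs 1 + Rabs (-h)). unfold Rminus. apply Rabs_triang.
        rewrite Rabs_R1, Rabs_Ropp. lra. }
      pose proof (Psi_bound (S n) h ltac:(lia) Hh).
      pose proof (K_pos (S n)). pose proof (Rabs_pos h). pose proof (pow_le (Rabs (1-h)) n (Rabs_pos _)).
      pose proof (Rabs_pos (Psi (S n) h)).
      rewrite <- pow2_abs. simpl pow.
      assert (Rabs h * Rabs (Psi (S n) h) <= Rabs h * (K (S n) * Rabs h)) by (apply Rmult_le_compat_l; lra).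
      apply Rle_trans with (2 ^ n * (Rabs h * Rabs (Psi (S n) h))).
      * rewrite <- Rmult_assoc. apply Rmult_le_compat_r. nra. nra.
      * apply Rle_trans with (2 ^ n * (Rabs h * (K (S n) * Rabs h))).
        apply Rmult_le_compat_l. apply pow_le; lra. auto. lra.
  - assert (D1 : is_derive (fun t => (1 - t) ^ n) t (INR n * (-1) * (1 - t) ^ (pred n))).
    { apply (is_derive_pow (fun t => 1 - t)). auto_derive. auto. ring. }
    assert (D2 : is_derive (fun t : R => t) t 1) by (auto_derive; auto).
    pose proof (is_derive_mult _ _ _ _ _ D1 D2 Rmult_comm) as D3.
    pose proof (is_derive_mult _ _ _ _ _ D3 (Psi_der (S n) t Ht) Rmult_comm) as D4.
    unfold g. match type of D4 with is_derive _ _ ?v => replace (d n t) with v end; [exact D4|].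
    unfold d, f. unfold mult, plus; simpl.
    rewrite !Psi_S by auto.
    destruct n as [|m].
    + simpl. field. auto.
    + simpl pred. rewrite !S_INR. simpl pow. field. auto.
Qed.

Definition y (n : nat) : R := RInt (f n) 0 1.

Lemma f_ex n : ex_RInt (f n) 0 1.
Proof. apply (ex_RInt_continuous (V := R_CompleteNormedModule)). intros; apply f_cont. Qed.

Lemma Psi_pos k t : 0 < t -> 0 < Psi k t.
Proof. intros Ht. unfold Psi. apply Rdiv_lt_0_compat. apply exp_pos. apply pow_lt; auto. Qed.

Lemma y_pos n : 0 < y n.
Proof.
  unfold y. apply RInt_gt_0. lra.
  - intros t Ht. unfold f. apply Rmult_lt_0_compat. apply pow_lt; lra. apply Psi_pos; lra.
  - intros; apply f_cont.
Qed.

Lemma int_d_ftc n : RInt (d n) 0 1 = g n 1 - g n 0.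
Proof.
  apply is_RInt_unique. apply (is_RInt_derive (V := R_CompleteNormedModule) (g n) (d n)).
  intros; apply g_der. intros; apply d_cont.
Qed.

Lemma int_d_lin n : RInt (d n) 0 1 =
  y (S n) + y n - INR n * RInt (fun t => (1 - t) ^ (pred n) * Psi (S n) t) 0 1.
Proof.
  assert (Hh : ex_RInt (fun t => (1 - t) ^ (pred n) * Psi (S n) t) 0 1).
  { apply (ex_RInt_continuous (V := R_CompleteNormedModule)). intros.
    apply (continuous_mult (fun t => (1 - t) ^ (pred n)) (Psi (S n))).
    apply poly_cont. apply Psi_cont; lia. }
  apply is_RInt_unique.
  apply (is_RInt_minus (V := R_NormedModule) (fun t => f (S n) t + f n t)).
  apply (is_RInt_plus (V := R_NormedModule)); apply (RInt_correct (V := R_CompleteNormedModule)); apply f_ex.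
  apply (is_RInt_scal (V := R_NormedModule)). apply (RInt_correct (V := R_CompleteNormedModule)); auto.
Qed.

Lemma rec0 : y 1 + y 0 = Psi 1 1.
Proof.
  pose proof (int_d_lin 0) as H. rewrite int_d_ftc in H. unfold g in H.
  rewrite Psi_0 in H by lia. simpl in H. lra.
Qed.

Lemma recS m : y (S (S m)) + y (S m) = INR (S m) * y m.
Proof.
  pose proof (int_d_lin (S m)) as H. rewrite int_d_ftc in H. unfold g in H.
  rewrite Psi_0 in H by lia. simpl pow in H. fold (y m) in H. change (RInt (fun t => (1 - t) ^ m * Psi (S (S m)) t) 0 1) with (y m) in H. replace (1 - 1) with 0 in H by ring. rewrite !Rmult_0_l, !Rmult_0_r in H. lra.
Qed.

Lemma z_G k : (1 <= k)%nat -> G k (y k / y (pred k)) = exp (1 / 2) * y 0.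
Proof.
  induction k as [|k IH]; intros Hk. lia.
  destruct k as [|k].
  - simpl G. unfold hh. simpl cc. pose proof (y_pos 0). pose proof (y_pos 1).
    assert (E : y 1 + y 0 = exp (- / 2)).
    { rewrite rec0. unfold Psi, Rdiv. rewrite !pow1, Rinv_1, Rmult_1_r. replace (2 * 1) with 2 by ring. reflexivity. }
    assert (E2 : exp (1/2) * exp (- / 2) = 1).
    { rewrite <- exp_plus. replace (1/2 + - / 2) with 0 by field. apply exp_0. }
    replace (1 / (1 + y 1 / y 0)) with (y 0 / (y 1 + y 0)) by (field; lra).
    pose proof (exp_pos (- / 2)). assert (E3 : exp (1/2) = / exp (- / 2)). { apply (Rmult_eq_reg_r (exp (- / 2))). rewrite E2, Rinv_l; lra. lra. } rewrite E. rewrite E3. field. lra.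
  - change (G (S (S k)) (y (S (S k)) / y (pred (S (S k))))) with (G (S k) (hh (S k) (y (S (S k)) / y (S k)))).
    rewrite <- IH by lia. f_equal.
    unfold hh. change (cc (S k)) with (INR (S k)).
    pose proof (y_pos k). pose proof (y_pos (S k)). pose proof (y_pos (S (S k))).
    pose proof (recS k). simpl pred.
    replace (INR (S k) / (1 + y (S (S k)) / y (S k))) with (INR (S k) * y (S k) / (y (S (S k)) + y (S k))) by (field; lra).
    rewrite H2. field. split; [lra|]. apply not_0_INR; lia.
Qed.

Theorem mainTheorem5 :
  exists pr : Riemann_integrable integrand 0 1,
    Un_cv (fun n : nat => R_cf (S n)) (exp (1 / 2) * RiemannInt pr).
Proof.
  assert (Hex : ex_RInt integrand 0 1).
  { apply (ex_RInt_continuous (V := R_CompleteNormedModule)). intros. apply (Psi_cont 2); lia. }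
  exists (ex_RInt_Reals_0 _ _ _ Hex).
  rewrite <- RInt_Reals.
  replace (RInt integrand 0 1) with (y 0).
  2:{ unfold y. apply RInt_ext. intros. unfold f, integrand, Psi. simpl. ring. }
  intros eps Heps. destruct (INR_unbounded (/ eps)) as [N HN].
  exists N. intros n Hn. unfold R_dist.
  rewrite R_cf_G by lia. rewrite <- (z_G (S (S n))) by lia.
  rewrite Rabs_minus_sym.
  apply Rle_lt_trans with (/ INR (S (S n))).
  - apply G_err. lia. left. apply Rdiv_lt_0_compat; apply y_pos.
  - assert (INR N <= INR (S (S n))) by (apply le_INR; lia).
    assert (0 < / eps) by (apply Rinv_0_lt_compat; auto).
    replace eps with (/ / eps) by (field; lra).
    apply Rinv_lt_contravar. nra. lra.
Qed.
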